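(* (1) If $A,B\in\mathcal A_n$ with $A\le B$ in ASM order, then there is a directed path $A=A_0\to A_1\to\cdots\to A_k=B$ in the ASM graph with $\beta(A_i)-\beta(A_{i-1})=1$ for all $i$. (2) For every $A\in\mathcal A_n$, $\beta(A)=\#\{B\in\mathcal A_n : B\le A \text{ and } B \text{ is a bigrassmannian permutation}\}$.
   Context: An $n\times n$ matrix $A=(a_{ij})$ is an alternating sign matrix (ASM) if all $a_{ij}\in\{-1,0,1\}$, all partial row and column sums lie in $\{0,1\}$, and all full row and column sums equal $1$; $\mathcal A_n$ is the set of these, and permutations are identified with permutation matrices. Corner sum matrix $\widetilde A(i,j)=\sum_{p\le i,q\le j}a_{pq}$ ($=0$ if $i=0$ or $j=0$). ASM order: $A\le B$ iff $\widetilde A(i,j)\ge\widetilde B(i,j)$ for all $i,j$. Bigrassmannian statistic: $\beta(A)=\sum_{i,j=1}^n\min(i,j)-\sum_{i,j=1}^n\widetilde A(i,j)$. A permutation $w$ is bigrassmannian if there is exactly one $i\in[n-1]$ with $w^{-1}(i)>w^{-1}(i+1)$ and exactly one $j\in[n-1]$ with $w(j)>w(j+1)$. For $i<j$, $k<l$, $R_{ij}^{kl}=\{(p,q): i\le p<j,\ k\le q<l\}$, $\widetilde R_{ij}^{kl}$ its $0/1$ indicator matrix; $E(A)$: rectangles with, for all $(p,q)\in R_{ij}^{kl}$, $\widetilde A(p,k)=\widetilde A(p,k-1)$, $\widetilde A(p,l)=\widetilde A(p,l-1)+1$, $\widetilde A(i,q)=\widetilde A(i-1,q)$, $\widetilde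 A(j,q)=\widetilde A(j-1,q)+1$; $E^*(A)$: rectangles with $\widetilde A(p,k)=\widetilde A(p,k-1)+1$, $\widetilde A(p,l)=\widetilde A(p,l-1)$, $\widetilde A(i,q)=\widetilde A(i-1,q)+1$, $\widetilde A(j,q)=\widetilde A(j-1,q)$. $r_{ij}^{kl}(A)$ is the ASM with corner sum matrix $\widetilde A+\widetilde R_{ij}^{kl}$ if $R_{ij}^{kl}\in E(A)$, $\widetilde A-\widetilde R_{ij}^{kl}$ if $R_{ij}^{kl}\in E^*(A)$, $\widetilde A$ otherwise. ASM graph edge $A\to B$: $B=r_{ij}^{kl}(A)$ for some $i<j$, $k<l$, and $\beta(A)<\beta(B)$. *)

(* Defs.v *)
From HB Require Import structures.
From mathcomp Require Import all_boot all_order all_algebra all_fingroup.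
Set Implicit Arguments. Unset Strict Implicit. Unset Printing Implicit Defensive.
Import Order.TTheory GRing.Theory Num.Theory.
Local Open Scope ring_scope.

(* Matrices are n x n with integer entries; row/column index p : 'I_n stands
   for the paper's index p+1 (1-based). *)

(* corner sum  Ã(i,j) = sum_{p<=i, q<=j} a_pq  (1-based i,j; 0 if i=0 or j=0) *)
Definition csum (n : nat) (A : 'M[int]_n) (i j : nat) : int :=
  \sum_(p < n | (p < i)%N) \sum_(q < n | (q < j)%N) A p q.

Definition is_ASM (n : nat) (A : 'M[int]_n) : Prop :=
  (forall p q : 'I_n, A p q \in [:: -1; 0; 1]) /\
  (forall (p : 'I_n) (m : nat), (m <= n)%N ->
      \sum_(q < n | (q < m)%N) A p q \in [:: 0; 1]) /\
  (forall (q : 'I_n) (m : nat), (m <= n)%N ->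
      \sum_(p < n | (p < m)%N) A p q \in [:: 0; 1]) /\
  (forall p : 'I_n, \sum_(q < n) A p q = 1) /\
  (forall q : 'I_n, \sum_(p < n) A p q = 1).

Definition asm_le (n : nat) (A B : 'M[int]_n) : bool :=
  [forall i : 'I_n.+1, forall j : 'I_n.+1, csum B i j <= csum A i j].

Definition beta (n : nat) (A : 'M[int]_n) : int :=
  \sum_(i < n) \sum_(j < n) (minn i.+1 j.+1)%:Z
  - \sum_(i < n) \sum_(j < n) csum A i.+1 j.+1.

Definition ndes (n : nat) (w : 'S_n) : nat :=
  #|[set j : 'I_n | [exists j' : 'I_n, (j' == j.+1 :> nat) && (w j' < w j)%N]]|.

Definition bigrassmannian (n : nat) (w : 'S_n) : bool :=
  (ndes w == 1%N) && (ndes w^-1 == 1%N).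

(* indicator of rectangle R_ij^kl = {(p,q) : i<=p<j, k<=q<l} (1-based) *)
Definition rect_ind (i j k l p q : nat) : int :=
  ((i <= p < j)%N && (k <= q < l)%N)%:R.

Definition inE_rect (n : nat) (A : 'M[int]_n) (i j k l : nat) : Prop :=
  forall p q : nat, (i <= p < j)%N -> (k <= q < l)%N ->
    [/\ csum A p k = csum A p k.-1,
        csum A p l = csum A p l.-1 + 1,
        csum A i q = csum A i.-1 q &
        csum A j q = csum A j.-1 q + 1].

Definition inEstar_rect (n : nat) (A : 'M[int]_n) (i j k l : nat) : Prop :=
  forall p q : nat, (i <= p < j)%N -> (k <= q < l)%N ->
    [/\ csum A p k = csum A p k.-1 + 1,
        csum A p l = csum A p l.-1,
        csum A i q = csum A i.-1 q + 1 &
        csum A j q = csum A j.-1 q].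

(* B = r_ij^kl(A): B's corner sum matrix is the prescribed one (a matrix is
   determined by its corner sum matrix). *)
Definition is_r (n : nat) (A B : 'M[int]_n) (i j k l : nat) : Prop :=
  forall p q : nat, (p <= n)%N -> (q <= n)%N ->
    [/\ inE_rect A i j k l -> csum B p q = csum A p q + rect_ind i j k l p q,
        ~ inE_rect A i j k l -> inEstar_rect A i j k l ->
          csum B p q = csum A p q - rect_ind i j k l p q &
        ~ inE_rect A i j k l -> ~ inEstar_rect A i j k l ->
          csum B p q = csum A p q].

Definition asm_edge (n : nat) (A B : 'M[int]_n) : Prop :=
  is_ASM A /\ is_ASM B /\
  (exists i j k l : nat,
     [/\ (0 < i < j)%N, (j <= n)%N, (0 < k < l)%N, (l <= n)%N &
         is_r A B i j k l]) /\
  beta A < beta B.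

(* Main.v *)
Require Import Defs.
From HB Require Import structures.
From mathcomp Require Import all_boot all_order all_algebra all_fingroup.
From mathcomp Require Import zify ring lra.
Import Order.TTheory GRing.Theory Num.Theory.
Local Open Scope ring_scope.
Set Implicit Arguments. Unset Strict Implicit. Unset Printing Implicit Defensive.


Lemma in01P (x : int) : x \in [:: 0; 1] <-> x = 0 \/ x = 1.
Proof. by rewrite !inE; split => [/orP[]/eqP|[]->]; auto; rewrite eqxx ?orbT. Qed.

Lemma sum_lt_S n (i : 'I_n) (f : 'I_n -> int) :
  \sum_(q < n | (q < i.+1)%N) f q = \sum_(q < n | (q < i)%N) f q + f i.
Proof.
rewrite (bigD1 i) /= ?ltnSn // addrC; congr (_ + _).
by apply: eq_bigl => q; rewrite ltnS -val_eqE /= ltn_neqAle andbC.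
Qed.

Lemma sum_lt_Sn n j (hj : (j < n)%N) (f : 'I_n -> int) :
  \sum_(q < n | (q < j.+1)%N) f q = \sum_(q < n | (q < j)%N) f q + f (Ordinal hj).
Proof. exact: (sum_lt_S (Ordinal hj)). Qed.

Lemma sum_lt_big n j (f : 'I_n -> int) : (n <= j)%N ->
  \sum_(q < n | (q < j)%N) f q = \sum_(q < n) f q.
Proof. by move=> h; apply: eq_bigl => q; rewrite (leq_trans (ltn_ord q) h). Qed.

Lemma csum0l n (A : 'M[int]_n) j : csum A 0 j = 0.
Proof. by rewrite /csum big_pred0 // => p; rewrite ltn0. Qed.

Lemma csum0r n (A : 'M[int]_n) i : csum A i 0 = 0.
Proof. by rewrite /csum big1 // => p _; rewrite big_pred0 // => q; rewrite ltn0. Qed.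

Lemma csum_rowS n (A : 'M[int]_n) (i : 'I_n) j :
  csum A i.+1 j = csum A i j + \sum_(q < n | (q < j)%N) A i q.
Proof. by rewrite /csum sum_lt_S. Qed.

Lemma csum_rowSn n (A : 'M[int]_n) i (hi : (i < n)%N) j :
  csum A i.+1 j = csum A i j + \sum_(q < n | (q < j)%N) A (Ordinal hi) q.
Proof. exact: (csum_rowS A (Ordinal hi)). Qed.

Lemma csum_colS n (A : 'M[int]_n) i (j : 'I_n) :
  csum A i j.+1 = csum A i j + \sum_(p < n | (p < i)%N) A p j.
Proof.
rewrite /csum -big_split /=; apply: eq_bigr => p _.
by rewrite sum_lt_S.
Qed.

Lemma csum_entry n (A : 'M[int]_n) (p q : 'I_n) :
  A p q = csum A p.+1 q.+1 - csum A p q.+1 - csum A p.+1 q + csum A p q.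
Proof.
rewrite !csum_rowS sum_lt_S; ring.
Qed.

Lemma csum_inj n (A B : 'M[int]_n) :
  (forall i j, (i <= n)%N -> (j <= n)%N -> csum A i j = csum B i j) -> A = B.
Proof.
move=> h; apply/matrixP => p q; rewrite !csum_entry !h //;
  by [apply: ltnW | apply: ltn_ord].
Qed.

Definition matC n (C : nat -> nat -> int) : 'M[int]_n :=
  \matrix_(p < n, q < n) (C p.+1 q.+1 - C p q.+1 - C p.+1 q + C p q).

Lemma rowpart_matC n (C : nat -> nat -> int) (p : 'I_n) j :
  (forall i, C i 0%N = 0) -> (j <= n)%N ->
  \sum_(q < n | (q < j)%N) matC n C p q = C p.+1 j - C p j.
Proof.
move=> C0; elim: j => [|j IH] hj.
  by rewrite big_pred0 // ?C0 ?subr0 // => q; rewrite ltn0.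
have hj' : (j < n)%N by [].
rewrite (sum_lt_Sn hj') IH; last by apply: ltnW.
rewrite mxE; ring.
Qed.

Lemma csum_matC n (C : nat -> nat -> int) :
  (forall j, C 0%N j = 0) -> (forall i, C i 0%N = 0) ->
  forall i j, (i <= n)%N -> (j <= n)%N -> csum (matC n C) i j = C i j.
Proof.
move=> C0l C0r; elim=> [|i IH] j hi hj; first by rewrite csum0l C0l.
have hi' : (i < n)%N by [].
rewrite (csum_rowSn _ hi') IH ?rowpart_matC //; [ring | by apply: ltnW..].
Qed.

Lemma csum_colSn n (A : 'M[int]_n) i j (hj : (j < n)%N) :
  csum A i j.+1 = csum A i j + \sum_(p < n | (p < i)%N) A p (Ordinal hj).
Proof. exact: (csum_colS A i (Ordinal hj)). Qed.

Definition validC n (C : nat -> nat -> int) :=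
 [/\ (forall j, C 0%N j = 0), (forall i, C i 0%N = 0),
     (forall i j, (i < n)%N -> (j <= n)%N -> C i.+1 j = C i j \/ C i.+1 j = C i j + 1),
     (forall i j, (i <= n)%N -> (j < n)%N -> C i j.+1 = C i j \/ C i j.+1 = C i j + 1) &
     (forall k, (k <= n)%N -> C n k = k%:Z /\ C k n = k%:Z)].

Lemma ASM_valid n (A : 'M[int]_n) : is_ASM A -> validC n (csum A).
Proof.
move=> [h1 [h2 [h3 [h4 h5]]]].
have rS : forall i j, (i < n)%N -> (j <= n)%N ->
    csum A i.+1 j = csum A i j \/ csum A i.+1 j = csum A i j + 1.
  move=> i j hi hj; rewrite (csum_rowSn _ hi).
  by case/in01P: (h2 (Ordinal hi) j hj) => ->; [left; rewrite addr0|right].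
have cS : forall i j, (i <= n)%N -> (j < n)%N ->
    csum A i j.+1 = csum A i j \/ csum A i j.+1 = csum A i j + 1.
  move=> i j hi hj; rewrite (csum_colSn _ _ hj).
  by case/in01P: (h3 (Ordinal hj) i hi) => ->; [left; rewrite addr0|right].
split => //; [exact: csum0l | exact: csum0r |].
move=> k; elim: k => [|k IH] hk; first by rewrite csum0l csum0r.
have hk' : (k < n)%N by [].
have [IH1 IH2] := IH (ltnW hk').
split.
  rewrite (csum_colSn _ _ hk') sum_lt_big // h5 IH1.
  by rewrite -[k.+1]addn1 PoszD.
rewrite (csum_rowSn _ hk') sum_lt_big // h4 IH2.
by rewrite -[k.+1]addn1 PoszD.
Qed.

Lemma in3P (x : int) : x \in [:: -1; 0; 1] <-> [\/ x = -1, x = 0 | x = 1].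
Proof.
rewrite !inE; split.
  by case/orP=> [/eqP->|/orP[]/eqP->]; [apply: Or31|apply: Or32|apply: Or33].
by case=> ->; rewrite eqxx ?orbT.
Qed.

Lemma matC_ASM n C : validC n C -> is_ASM (matC n C).
Proof.
move=> [C0l C0r rS cS bd].
have cs := csum_matC C0l C0r.
have colp : forall (q : 'I_n) m, (m <= n)%N ->
    \sum_(p < n | (p < m)%N) matC n C p q = C m q.+1 - C m q.
  move=> q m hm.
  have := csum_colSn (matC n C) m (ltn_ord q).
  rewrite !cs //; last by apply: ltnW.
  have -> : Ordinal (ltn_ord q) = q by apply: val_inj.
  move=> ->; ring.
split.
  move=> p q; rewrite mxE; apply/in3P.
  have hp := ltn_ord p; have hq := ltn_ord q.
  move: (rS p q.+1 hp hq) (rS p q hp (ltnW hq)).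
  move: (C p.+1 q.+1) (C p q.+1) (C p.+1 q) (C p q) => a b c d.
  by case=> ->; case=> ->; [apply: Or32 | apply: Or31 | apply: Or33 | apply: Or32];
    ring.
split.
  move=> p m hm; rewrite rowpart_matC //; apply/in01P.
  by case: (rS p m (ltn_ord p) hm) => ->; [left|right]; ring.
split.
  move=> q m hm; rewrite colp //; apply/in01P.
  by case: (cS m q hm (ltn_ord q)) => ->; [left|right]; ring.
split.
  move=> p; rewrite -(sum_lt_big _ (leqnn n)) rowpart_matC //.
  have hp := ltn_ord p.
  rewrite (proj2 (bd _ hp)) (proj2 (bd _ (ltnW hp))).
  by rewrite -[p.+1]addn1 PoszD; ring.
move=> q; rewrite -(sum_lt_big _ (leqnn n)) colp //.
have hq := ltn_ord q.
rewrite (proj1 (bd _ hq)) (proj1 (bd _ (ltnW hq))).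
by rewrite -[q.+1]addn1 PoszD; ring.
Qed.

Section Lip.
Variables (n : nat) (C : nat -> nat -> int).
Hypothesis vC : validC n C.

Lemma lip_r i k j : (i + k <= n)%N -> (j <= n)%N ->
  C i j <= C (i + k)%N j <= C i j + k%:Z.
Proof.
case: vC => _ _ rS _ _.
elim: k => [|k IH] h hj; first by rewrite addn0; lia.
have h' : (i + k < n)%N by rewrite addnS in h.
have := IH (ltnW h') hj; rewrite addnS.
case: (rS _ _ h' hj) => ->; rewrite -[k.+1]addn1 PoszD; lia.
Qed.

Lemma lip_c i j k : (i <= n)%N -> (j + k <= n)%N ->
  C i j <= C i (j + k)%N <= C i j + k%:Z.
Proof.
case: vC => _ _ _ cS _.
elim: k => [|k IH] hi h; first by rewrite addn0; lia.
have h' : (j + k < n)%N by rewrite addnS in h.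
have := IH hi (ltnW h'); rewrite addnS.
case: (cS _ _ hi h') => ->; rewrite -[k.+1]addn1 PoszD; lia.
Qed.

Lemma vbounds i j : (i <= n)%N -> (j <= n)%N ->
  [/\ 0 <= C i j, C i j <= i%:Z, C i j <= j%:Z & (i + j)%:Z - n%:Z <= C i j].
Proof.
case: (vC) => C0l C0r _ _ bd => hi hj.
have := @lip_r 0%N i j; rewrite add0n C0l => /(_ hi hj) /andP[h1 h2].
have := @lip_c i 0%N j; rewrite add0n C0r => /(_ hi hj) /andP[_ h3].
have := @lip_r i (n - i) j; rewrite subnKC // => /(_ (leqnn n) hj) /andP[_ h4].
rewrite (proj1 (bd _ hj)) in h4.
rewrite add0r in h2 h3; split => //.
by move: h4; rewrite PoszD -subzn // => h4; lia.
Qed.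
End Lip.

Lemma exmax (T : eqType) (s : seq T) (f : T -> int) x0 :
  x0 \in s -> exists2 x, x \in s & forall y, y \in s -> f y <= f x.
Proof.
elim: s x0 => [//|a s IH] x0 _.
case: s IH => [|b s] IH.
  by exists a; rewrite ?inE // => y; rewrite inE => /eqP->.
have [x xs hx] := IH b (mem_head _ _).
case: (lerP (f a) (f x)) => hax.
  exists x; first by rewrite inE xs orbT.
  by move=> y; rewrite inE => /orP[/eqP->//|/hx].
exists a; first exact: mem_head.
move=> y; rewrite inE => /orP[/eqP->//|/hx h]; exact: le_trans h (ltW hax).
Qed.

Lemma stepC n (C D : nat -> nat -> int) : validC n C -> validC n D ->
  (forall i j, (i <= n)%N -> (j <= n)%N -> D i j <= C i j) ->
  forall i0 j0, (i0 <= n)%N -> (j0 <= n)%N -> D i0 j0 < C i0 j0 ->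
  exists p q, [/\ (0 < p < n)%N, (0 < q < n)%N, D p q < C p q,
     C p.-1 q = C p q - 1 & C p q.-1 = C p q - 1] /\
     (C p.+1 q = C p q /\ C p q.+1 = C p q).
Proof.
move=> vC vD hle i0 j0 hi0 hj0 hlt.
pose s := [seq t : ('I_n.+1 * 'I_n.+1)%type <- enum {: 'I_n.+1 * 'I_n.+1} | D t.1 t.2 < C t.1 t.2].
pose f (t : ('I_n.+1 * 'I_n.+1)%type) := 2%:Z * C t.1 t.2 - (t.1 + t.2)%N%:Z.
have ins : forall i j, (i <= n)%N -> (j <= n)%N -> D i j < C i j ->
    ((inord i, inord j) : ('I_n.+1 * 'I_n.+1)%type) \in s.
  by move=> i j hi hj h; rewrite mem_filter mem_enum /= !inordK ?ltnS // h.
have [[p' q'] ps hmax] := exmax f (ins _ _ hi0 hj0 hlt).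
have bnd : forall i j, (i <= n)%N -> (j <= n)%N -> D i j < C i j ->
    2%:Z * C i j - (i + j)%N%:Z <= 2%:Z * C p' q' - (p' + q')%N%:Z.
  by move=> i j hi hj h; have := hmax _ (ins _ _ hi hj h); rewrite /f /= !inordK ?ltnS.
move: ps; rewrite mem_filter /= => /andP[hpq _].
have hp := ltn_ord p'; have hq := ltn_ord q'.
move: (nat_of_ord p') (nat_of_ord q') hp hq hpq bnd => p q hp hq hpq bnd.
case: vC => C0l C0r rS cS bd; case: vD => D0l D0r rSD cSD bdD.
have p0 : (0 < p)%N.
  case: p hp hpq bnd => // _; rewrite C0l D0l; lia.
have q0 : (0 < q)%N.
  case: q hq hpq bnd => // _; rewrite C0r D0r; lia.
have pn : (p < n)%N.
  case: (ltngtP p n) => // e; first lia.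
  by move: hpq; rewrite e (proj1 (bd _ hq)) (proj1 (bdD _ hq)) ltxx.
have qn : (q < n)%N.
  case: (ltngtP q n) => // e; first lia.
  by move: hpq; rewrite e (proj2 (bd _ hp)) (proj2 (bdD _ hp)) ltxx.
exists p, q; split; [split | split].
- by apply/andP; split.
- by apply/andP; split.
- by [].
- case: p p0 hp hpq bnd pn => // p _ hp hpq bnd pn /=.
  have hleq := hle p q (ltnW hp) hq.
  case: (rS p q (ltnW pn) hq) => e; last by rewrite e; lia.
  have := bnd p q (ltnW hp) hq; rewrite -e.
  have := rSD p q (ltnW pn) hq; lia.
- case: q q0 hq hpq bnd qn => // q _ hq hpq bnd qn /=.
  have hleq := hle p q hp (ltnW hq).
  case: (cS p q hp (ltnW qn)) => e; last by rewrite e; lia.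
  have := bnd p q hp (ltnW hq); rewrite -e.
  have := cSD p q hp (ltnW qn); lia.
- case: (rS p q pn hq) => e; first by [].
  have := bnd p.+1 q pn hq; rewrite e.
  have := rSD p q pn hq; lia.
- case: (cS p q hp qn) => e; first by [].
  have := bnd p q.+1 hp qn; rewrite e.
  have := cSD p q hp qn; lia.
Qed.

Definition decC (C : nat -> nat -> int) p q : nat -> nat -> int :=
  fun i j => C i j - (if (i == p) && (j == q) then 1 else 0).

Lemma decC_valid n C p q : validC n C -> (0 < p < n)%N -> (0 < q < n)%N ->
  C p.-1 q = C p q - 1 -> C p q.-1 = C p q - 1 ->
  C p.+1 q = C p q -> C p q.+1 = C p q -> validC n (decC C p q).
Proof.
move=> [C0l C0r rS cS bd] hp hq hPm hQm hPp hQp; rewrite /decC; split.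
- by move=> j; rewrite C0l; case: ifP => h; lia.
- by move=> i; rewrite C0r; case: ifP => h; lia.
- move=> i j hi hj; have := rS i j hi hj.
  case: ifP => [/andP[/eqP ep /eqP eq]|h1].
    by subst p q; rewrite /= in hPm; case: ifP => h; lia.
  case: ifP => [/andP[/eqP ep /eqP eq]|h2].
    by subst p q; lia.
  lia.
- move=> i j hi hj; have := cS i j hi hj.
  case: ifP => [/andP[/eqP ep /eqP eq]|h1].
    by subst p q; rewrite /= in hQm; case: ifP => h; lia.
  case: ifP => [/andP[/eqP ep /eqP eq]|h2].
    by subst p q; lia.
  lia.
- move=> k hk; rewrite (proj1 (bd k hk)) (proj2 (bd k hk)).
  by split; case: ifP => h; lia.
Qed.

Lemma ind_sum m p q : (p < m)%N -> (q < m)%N ->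
  \sum_(i < m) \sum_(j < m)
     (if (nat_of_ord i == p) && (nat_of_ord j == q) then 1 else 0 : int) = 1.
Proof.
move=> hp hq.
rewrite (bigD1 (Ordinal hp)) //= [X in _ + X]big1; last first.
  move=> i ne; apply: big1 => j _.
  by have -> : (nat_of_ord i == p) = false by apply/negbTE; rewrite -val_eqE in ne.
rewrite eqxx /= addr0 (bigD1 (Ordinal hq)) //= eqxx [X in _ + X]big1 ?addr0 //.
move=> j ne.
by have -> : (nat_of_ord j == q) = false by apply/negbTE; rewrite -val_eqE in ne.
Qed.

Lemma ind_sumS m p q : (0 < p <= m)%N -> (0 < q <= m)%N ->
  \sum_(i < m) \sum_(j < m)
     (if (i.+1 == p) && (j.+1 == q) then 1 else 0 : int) = 1.
Proof.
case: p => // p; case: q => // q /= hp hq.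
rewrite -[RHS](ind_sum hp hq); apply: eq_bigr => i _; apply: eq_bigr => j _.
by rewrite !eqSS.
Qed.

Lemma leqnSn' p : (p <= p < p.+1)%N.
Proof. by rewrite leqnn ltnSn. Qed.

Lemma path_lemma n (B : 'M[int]_n) : is_ASM B -> forall k (A : 'M[int]_n),
  is_ASM A ->
  (forall i j, (i <= n)%N -> (j <= n)%N -> csum B i j <= csum A i j) ->
  \sum_(i < n.+1) \sum_(j < n.+1) (csum A i j - csum B i j) = k%:Z ->
  exists (K : nat) (P : nat -> 'M[int]_n),
    [/\ P 0%N = A, P K = B &
        forall m : nat, (m < K)%N ->
          asm_edge (P m) (P m.+1) /\ beta (P m.+1) - beta (P m) = 1].
Proof.
move=> aB; elim=> [|k IH] A aA hle hs.
  have z : forall i j, (i <= n)%N -> (j <= n)%N -> csum A i j = csum B i j.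
    move=> i j hi hj.
    have hgi : forall (i0 j0 : 'I_n.+1), true -> 0 <= csum A i0 j0 - csum B i0 j0.
      by move=> i0 j0 _; rewrite subr_ge0; apply: hle; [exact: (ltn_ord i0)|exact: (ltn_ord j0)].
    have hge : forall i0 : 'I_n.+1, true -> 0 <= \sum_(j < n.+1) (csum A i0 j - csum B i0 j).
      by move=> i0 _; apply: sumr_ge0 => j0 _; apply: hgi.
    have h0 := @psumr_eq0P _ _ _ _ hge hs.
    have := @psumr_eq0P _ _ _ _ (hgi (inord i)) (h0 (inord i) isT) (inord j) isT.
    by rewrite !inordK // => /eqP; rewrite subr_eq0 => /eqP.
  have eAB := csum_inj z.
  exists 0%N, (fun _ => A); split => //.
case: (boolP [exists i : 'I_n.+1, exists j : 'I_n.+1, csum B i j < csum A i j]);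
  last first.
  move=> /negP hneg; exfalso.
  have : \sum_(i < n.+1) \sum_(j < n.+1) (csum A i j - csum B i j) = 0.
    apply: big1 => i _; apply: big1 => j _.
    have h1 := hle _ _ (ltn_ord i) (ltn_ord j).
    have h2 : ~~ (csum B i j < csum A i j).
      by apply/negP => h; apply: hneg; apply/existsP; exists i; apply/existsP; exists j.
    move: h1 h2; move: (csum A i j) (csum B i j) => a b; lia.
  by rewrite hs.
move=> /existsP[i /existsP[j hij]].
have vA := ASM_valid aA; have vB := ASM_valid aB.
have [p [q [[hp hq hpq hPm hQm] [hPp hQp]]]] :=
  stepC vA vB hle (ltn_ord i) (ltn_ord j) hij.
have vC' := decC_valid vA hp hq hPm hQm hPp hQp.
pose A' := matC n (decC (csum A) p q).
have cA' : forall i j, (i <= n)%N -> (j <= n)%N ->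
    csum A' i j = decC (csum A) p q i j.
  by case: vC' => C0l C0r _ _ _; apply: csum_matC.
have aA' : is_ASM A' := matC_ASM vC'.
have hle' : forall i j, (i <= n)%N -> (j <= n)%N -> csum B i j <= csum A' i j.
  move=> i0 j0 hi hj; rewrite cA' // /decC.
  case: ifP => [/andP[/eqP e1 /eqP e2]|_]; last by rewrite subr0; apply: hle.
  by subst i0 j0; move: hpq; move: (csum B p q) (csum A p q) => a b; lia.
have hs' : \sum_(i < n.+1) \sum_(j < n.+1) (csum A' i j - csum B i j) = k%:Z.
  transitivity (\sum_(i < n.+1) \sum_(j < n.+1) (csum A i j - csum B i j) -
     \sum_(i < n.+1) \sum_(j < n.+1)
     (if (nat_of_ord i == p) && (nat_of_ord j == q) then 1 else 0 : int)).
    rewrite -sumrB; apply: eq_bigr => i0 _; rewrite -sumrB; apply: eq_bigr => j0 _.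
    rewrite cA'; [|exact: (ltn_ord i0)|exact: (ltn_ord j0)].
    by rewrite /decC; case: ifP => _; ring.
  rewrite hs ind_sum; last by case/andP: hq => _ /ltnW.
    by rewrite -[k.+1]addn1 PoszD; ring.
  by case/andP: hp => _ /ltnW.
have [K [P [P0 PK Hs]]] := IH A' aA' hle' hs'.
have hbeta : beta A' - beta A = 1.
  rewrite /beta.
  have -> : \sum_(i < n) \sum_(j < n) csum A' i.+1 j.+1 =
     \sum_(i < n) \sum_(j < n) csum A i.+1 j.+1 - 1.
    rewrite -(ind_sumS (m:=n) (p:=p) (q:=q)); last 2 first.
    - by case/andP: hp => -> /ltnW.
    - by case/andP: hq => -> /ltnW.
    rewrite -sumrB; apply: eq_bigr => i0 _; rewrite -sumrB; apply: eq_bigr => j0 _.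
    rewrite cA'; [|exact: (ltn_ord i0)|exact: (ltn_ord j0)].
    by rewrite /decC.
  ring.
exists K.+1, (fun m => if m is m'.+1 then P m' else A); split => //.
case=> [|m] hm; last exact: Hs.
rewrite P0; split => //.
split => //; split => //; split; last first.
  by move: hbeta; move: (beta A) (beta A') => a b; lia.
case/andP: (hp) => hp1 hp2; case/andP: (hq) => hq1 hq2.
exists p, p.+1, q, q.+1; split;
  [by rewrite hp1 ltnSn | by [] | by rewrite hq1 ltnSn | by [] |].
move=> p0 q0 hp0 hq0; split.
- move=> hE; exfalso.
  have [h1 _ _ _] := hE p q (leqnSn' p) (leqnSn' q).
  by move: h1 hQm; move: (csum A p q) (csum A p q.-1) => a b; lia.
- move=> _ _; rewrite cA' // /decC /rect_ind.
  have -> : (p <= p0 < p.+1)%N = (p0 == p) by rewrite ltnS -eqn_leq eq_sym.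
  have -> : (q <= q0 < q.+1)%N = (q0 == q) by rewrite ltnS -eqn_leq eq_sym.
  by case: (_ && _).
- move=> _ hnE; exfalso; apply: hnE => p1 q1 h1 h2.
  have ep : p1 = p by lia.
  have eq : q1 = q by lia.
  subst p1 q1; split => /=.
  + by rewrite hQm; ring.
  + by rewrite hQp.
  + by rewrite hPm; ring.
  + by rewrite hPp.
Qed.


Definition shapeF (x y a r : nat) : nat :=
  if (r < a)%N then r else if (r <= x)%N then (r + y + 1 - a)%N
  else if (r <= x + y + 1 - a)%N then (r - (x + 1 - a))%N else r.

Definition validP n (x y a : nat) : bool :=
  [&& (a <= x)%N, (a <= y)%N & (x + y + 2 <= n + a)%N].

Ltac shs := rewrite /shapeF; repeat (case: ifP => ?); lia.

Lemma shape_lt n x y a r : validP n x y a -> (r < n)%N -> (shapeF x y a r < n)%N.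
Proof. move=> /and3P[h1 h2 h3] hr; shs. Qed.

Lemma shape_cases x y a r :
  [\/ (r < a)%N /\ shapeF x y a r = r,
     (a <= r <= x)%N /\ shapeF x y a r = (r + y + 1 - a)%N,
     (x < r <= x + y + 1 - a)%N /\ shapeF x y a r = (r - (x + 1 - a))%N |
     (x + y + 1 - a < r)%N /\ shapeF x y a r = r].
Proof.
rewrite /shapeF; case: ifP => h1; first by apply: Or41.
case: ifP => h2; first by apply: Or42; split => //; lia.
case: ifP => h3; first by apply: Or43; split => //; lia.
by apply: Or44; split => //; lia.
Qed.

Lemma shapeK n x y a r : validP n x y a -> (r < n)%N ->
  shapeF y x a (shapeF x y a r) = r.
Proof.
move=> /and3P[h1 h2 h3] hr; case: (shape_cases x y a r) => -[h ->]; shs.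
Qed.

Lemma shape_desc n x y a r : validP n x y a -> (r.+1 < n)%N ->
  (shapeF x y a r.+1 < shapeF x y a r)%N <-> r = x.
Proof. move=> /and3P[h1 h2 h3] hr; split; shs. Qed.

Lemma validP_sym n x y a : validP n x y a = validP n y x a.
Proof. rewrite /validP; apply/and3P/and3P => -[h1 h2 h3]; split => //; lia. Qed.

Definition Fw n (w : 'S_n) (r : nat) : nat :=
  if insub r is Some i then nat_of_ord (w i) else r.

Lemma FwE n (w : 'S_n) (i : 'I_n) : Fw w i = w i.
Proof. by rewrite /Fw valK. Qed.

Lemma FwEo n (w : 'S_n) r (h : (r < n)%N) : Fw w r = w (Ordinal h).
Proof. exact: (FwE w (Ordinal h)). Qed.

Definition psi_fun n x y a (i : 'I_n) : 'I_n :=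
  if validP n x y a then insubd i (shapeF x y a i) else i.

Lemma psi_inj n x y a : injective (@psi_fun n x y a).
Proof.
move=> i j; rewrite /psi_fun; case: ifP => v // e; apply: ord_inj.
have := congr1 val e; rewrite !val_insubd !(shape_lt v (ltn_ord _)) => e'.
by rewrite -(shapeK v (ltn_ord i)) e' (shapeK v (ltn_ord j)).
Qed.

Definition psi n x y a : 'S_n := perm (@psi_inj n x y a).

Lemma psiE n x y a (i : 'I_n) : validP n x y a -> (psi n x y a i : nat) = shapeF x y a i.
Proof. by move=> v; rewrite permE /psi_fun v val_insubd (shape_lt v (ltn_ord _)). Qed.

Lemma psiF n x y a r : validP n x y a -> (r < n)%N -> Fw (psi n x y a) r = shapeF x y a r.
Proof. by move=> v hr; rewrite (FwEo _ hr) psiE. Qed.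

Lemma psiV n x y a : validP n x y a -> (psi n x y a)^-1%g = psi n y x a.
Proof.
move=> v; have v' : validP n y x a by rewrite -validP_sym.
apply/permP => i; apply: (@perm_inj _ (psi n x y a)); rewrite permKV.
by apply: val_inj; rewrite /= psiE // psiE // (shapeK v' (ltn_ord _)).
Qed.

Lemma ndes_set n (w : 'S_n) (j : 'I_n) :
  [exists j' : 'I_n, (j' == j.+1 :> nat) && (w j' < w j)%N] =
  (j.+1 < n)%N && (Fw w j.+1 < Fw w j)%N.
Proof.
apply/existsP/andP => [[j' /andP[/eqP e h]]|[h1 h2]].
  by split; rewrite -e ?ltn_ord // !FwE.
exists (Ordinal h1); rewrite eqxx /=.
by move: h2; rewrite (FwEo _ h1) FwE.
Qed.

Lemma ndes1P n (w : 'S_n) : ndes w = 1%N <->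
  exists d, (d.+1 < n)%N /\
    forall r, (r.+1 < n)%N -> ((Fw w r.+1 < Fw w r)%N <-> r = d).
Proof.
rewrite /ndes; split.
  move/eqP/cards1P => [j0 e].
  have mem : forall j : 'I_n, ((j.+1 < n)%N && (Fw w j.+1 < Fw w j)%N) = (j == j0).
    by move=> j; move/setP: e => /(_ j); rewrite !inE ndes_set.
  exists j0; split; first by have := mem j0; rewrite eqxx => /andP[].
  move=> r hr; have hr' : (r < n)%N by apply: ltnW.
  have := mem (Ordinal hr'); rewrite /= hr /= -val_eqE /= => ->.
  by split => [/eqP|->].
move=> [d [hd hc]]; apply/eqP/cards1P.
have hd' : (d < n)%N by apply: ltnW.
exists (Ordinal hd'); apply/setP => j; rewrite !inE ndes_set -val_eqE /=.
case: (boolP (j.+1 < n)%N) => hj /=.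
  by apply/idP/eqP => [/(hc _ hj)|/(hc _ hj)].
by apply/esym/eqP => e; move: hj; rewrite e hd.
Qed.

Lemma psi_bigr n x y a : validP n x y a -> bigrassmannian (psi n x y a).
Proof.
move=> v; have v' : validP n y x a by rewrite -validP_sym.
have dx : (x.+1 < n)%N by case/and3P: v => h1 h2 h3; lia.
have dy : (y.+1 < n)%N by case/and3P: v => h1 h2 h3; lia.
rewrite /bigrassmannian psiV //; apply/andP; split; apply/eqP; apply/ndes1P.
  exists x; split => // r hr; rewrite !psiF //; last exact: ltnW.
  exact: (shape_desc v hr).
exists y; split => // r hr; rewrite !psiF //; last exact: ltnW.
exact: (shape_desc v' hr).
Qed.

Lemma run (F G h : nat -> nat) (V : nat -> Prop) p0 p1 :
 (forall r s, (p0 <= r)%N -> (r < s)%N -> (s <= p1)%N -> (F r < F s)%N) ->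
 (forall y, V y -> [/\ (p0 <= G y)%N, (G y <= p1)%N & F (G y) = y]) ->
 (forall r, (p0 <= r)%N -> (r <= p1)%N -> V (F r)) ->
 V (h p0) -> (forall y, V y -> (h p0 <= y)%N) ->
 (forall r, (p0 <= r)%N -> (r < p1)%N -> (h r < h r.+1)%N) ->
 (forall r y, (p0 <= r)%N -> (r < p1)%N -> V y -> (h r < y)%N ->
     V (h r.+1) /\ (h r.+1 <= y)%N) ->
 forall r, (p0 <= r)%N -> (r <= p1)%N -> F r = h r.
Proof.
move=> mono inv into V0 min0 hinc hs.
have mono' : forall r s, (p0 <= r)%N -> (r <= s)%N -> (s <= p1)%N -> (F r <= F s)%N.
  move=> r s h1 h2 h3; move: h2; rewrite leq_eqVlt => /orP[/eqP->//|h2].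
  exact: ltnW (mono _ _ h1 h2 h3).
move=> r h1; rewrite -(subnKC h1); elim: (r - p0)%N => [|k IH] hk.
  rewrite addn0 in hk *.
  have [g1 g2 g3] := inv _ V0.
  have := min0 _ (into _ (leqnn p0) hk).
  have := mono' _ _ (leqnn p0) g1 g2; rewrite g3; lia.
rewrite addnS in hk *.
have hk' : (p0 + k <= p1)%N by apply: ltnW.
have IH' := IH hk'.
have m1 := mono _ _ (leq_addr k p0) (ltnSn _) hk.
have hlt : (h (p0 + k) < F (p0 + k).+1)%N by rewrite -IH'.
have [Vh hle] := hs _ _ (leq_addr k p0) hk (into _ (leq_trans (leq_addr k p0) (leqnSn _)) hk) hlt.
have [g1 g2 g3] := inv _ Vh.
case: (leqP (G (h (p0 + k).+1)) (p0 + k)) => hg.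
  have := mono' _ _ g1 hg hk'; rewrite g3 IH'.
  have := hinc _ (leq_addr k p0) hk; lia.
have := mono' _ _ (leq_trans (leq_addr k p0) (leqnSn _)) hg g2; rewrite g3; lia.
Qed.

Lemma surj_nat n (F G : nat -> nat) d e :
  (forall r, (r < n)%N -> (F r < n)%N) -> (forall r, (r < n)%N -> (G r < n)%N) ->
  (forall r, (r < n)%N -> G (F r) = r) -> (forall r, (r < n)%N -> F (G r) = r) ->
  (d.+1 < n)%N -> (e.+1 < n)%N ->
  (forall r, (r.+1 < n)%N -> (F r.+1 < F r)%N <-> r = d) ->
  (forall r, (r.+1 < n)%N -> (G r.+1 < G r)%N <-> r = e) ->
  exists a, validP n d e a /\ forall r, (r < n)%N -> F r = shapeF d e a r.
Proof.
move=> Fn Gn GF FG hd he HD HE.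
have Fstep : forall s, (s.+1 < n)%N -> s <> d -> (F s < F s.+1)%N.
  move=> s hs ne.
  have h1 : ~ (F s.+1 < F s)%N by rewrite HD.
  have h2 : F s <> F s.+1.
    by move=> e1; have := congr1 G e1; rewrite !GF //; [lia | apply: ltnW].
  lia.
have M1 : forall r s, (r < s)%N -> (s <= d)%N -> (F r < F s)%N.
  move=> r; elim=> // s IH hrs hs.
  have st := Fstep s (ltac:(lia)) (ltac:(lia)).
  move: hrs; rewrite ltnS leq_eqVlt => /orP[/eqP->//|hrs].
  have := IH hrs (ltnW hs); lia.
have M2 : forall r s, (d < r)%N -> (r < s)%N -> (s < n)%N -> (F r < F s)%N.
  move=> r; elim=> // s IH hdr hrs hs.
  have st := Fstep s hs (ltac:(lia)).
  move: hrs; rewrite ltnS leq_eqVlt => /orP[/eqP->//|hrs].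
  have := IH hdr hrs (ltnW hs); lia.
have ID : forall x, (x.+1 < n)%N -> ((G x.+1 <= d)%N && (d < G x)%N) <-> x = e.
  move=> x hx; rewrite -HE //; split; first by case/andP => h1 h2; lia.
  move=> hlt; have hx' : (x < n)%N by apply: ltnW.
  case: (leqP (G x) d) => hv.
    by have := M1 _ _ hlt hv; rewrite !FG //; lia.
  case: (leqP (G x.+1) d) => hu; first by apply/andP.
  by have := M2 _ _ hu hlt (Gn _ hx'); rewrite !FG //; lia.
have S1 : forall x, (x.+1 < n)%N -> x <> e -> (G x.+1 <= d)%N -> (G x <= d)%N.
  move=> x hx ne h; case: (leqP (G x) d) => // hg; exfalso; apply: ne.
  by apply/(ID x hx); rewrite h hg.
have [Se1 Se2] : (G e.+1 <= d)%N /\ (d < G e)%N.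
  by have := proj2 (ID e he) erefl => /andP.
have down : forall k x, (x + k < n)%N ->
    (forall z, (x <= z)%N -> (z < x + k)%N -> z <> e) ->
    (G (x + k) <= d)%N -> (G x <= d)%N.
  elim => [|k IH] x hxk hz hin; first by rewrite addn0 in hin.
  apply: IH; [lia | move=> z h1 h2; apply: hz; lia | ].
  apply: S1; [lia | apply: hz; lia | by rewrite -addnS].
have exa : exists x, ~~ (G x <= d)%N by exists e; rewrite -ltnNge.
case: (ex_minnP exa) => a ha amin.
have ae : (a <= e)%N by apply: amin; rewrite -ltnNge.
have Sa : forall x, (x < a)%N -> (G x <= d)%N.
  move=> x hx; case: (leqP (G x) d) => // hg.
  by have := amin x; rewrite -ltnNge hg => /(_ isT); lia.
have exc : exists x, (e < x)%N && ((n <= x)%N || ~~ (G x <= d)%N).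
  by exists n; rewrite leqnn /= andbT; apply: ltnW.
case: (ex_minnP exc) => c /andP[hc1 hc2] cmin.
have cn : (c <= n)%N by apply: cmin; rewrite leqnn andbT; apply: ltnW.
have Sc : forall x, (e < x)%N -> (x < c)%N -> (x < n)%N && (G x <= d)%N.
  move=> x h1 h2; case: (boolP ((x < n)%N && (G x <= d)%N)) => // hb.
  have := cmin x; rewrite h1 /=.
  have -> : (n <= x)%N || ~~ (G x <= d)%N.
    by move: hb; rewrite negb_and -leqNgt.
  move=> /(_ isT); lia.
have ec : (e.+1 < c)%N.
  case: (ltngtP e.+1 c) => // hh; first lia.
  by move: hc2; rewrite -hh Se1 orbF leqNgt he.
have Schar : forall x, (x < n)%N -> (G x <= d)%N <-> ((x < a)%N \/ (e < x < c)%N).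
  move=> x hx; split.
  - move=> h; case: (ltnP x a) => hxa; first by left.
    right; case: (leqP x e) => hxe.
      exfalso; have := down (x - a)%N a; rewrite subnKC // => /(_ hx).
      have : ~~ (G a <= d)%N by [].
      move=> /negP hh hd'; apply: hh; apply: hd' => //.
      by move=> z h1 h2; lia.
    case: (ltnP x c) => hxc; first by apply/andP.
    exfalso; have := down (x - c)%N c; rewrite subnKC // => /(_ hx).
    have hcn : (c < n)%N by lia.
    have : ~~ (G c <= d)%N by move: hc2; rewrite leqNgt hcn.
    move=> /negP hh hd'; apply: hh; apply: hd' => //.
    by move=> z h1 h2; lia.
  - case => [/Sa //|/andP[h1 h2]].
    by case/andP: (Sc x h1 h2).
have keyV : forall z, (z < n)%N -> ((z < a)%N \/ (e < z < c)%N) -> (G z <= d)%N.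
  by move=> z hz h; apply/(Schar z hz).
have keyV' : forall z, (z < n)%N -> ~ ((z < a)%N \/ (e < z < c)%N) -> ~~ (G z <= d)%N.
  by move=> z hz h; apply/negP => /(Schar z hz).
have keyV2 : forall z, (z < n)%N -> ((z < a)%N \/ (e < z < c)%N) ->
    (z < n)%N /\ (G z <= d)%N.
  by move=> z hz h; split => //; apply: keyV.
have keyV2' : forall z, (z < n)%N -> ~ ((z < a)%N \/ (e < z < c)%N) ->
    (z < n)%N /\ ~~ (G z <= d)%N.
  by move=> z hz h; split => //; apply: keyV'.
pose h r := if (r < a)%N then r else (r + e + 1 - a)%N.
have R1 : forall r, (0 <= r)%N -> (r <= d)%N -> F r = h r.
  apply: (@run F G h (fun y => (y < n)%N /\ (G y <= d)%N) 0%N d).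
  - by move=> r s _; apply: M1.
  - by move=> y [hy hS]; split => //; apply: FG.
  - move=> r _ hr; have hrn : (r < n)%N by lia.
    by split; [apply: Fn | rewrite GF].
  - rewrite /h; case: ifP => h0; split; try lia.
      by apply: Sa.
    by have -> : (0 + e + 1 - a = e.+1)%N by lia.
  - move=> y [hy /(Schar y hy) hS]; rewrite /h; case: ifP => h0; lia.
  - by move=> r _ hr; rewrite /h; case: ifP => ?; case: ifP => ?; lia.
  - move=> r y _ hr [hy /(Schar y hy) hS]; rewrite /= /h.
    by case: ifP => h1; case: ifP => h2 hry; (split; [apply: keyV2 | ]); lia.
have da : (a <= d)%N.
  case: (leqP a d) => // hda; exfalso.
  have := R1 _ (leq0n _) Se1; rewrite FG // /h; case: ifP => ?; lia.
have hFd := R1 d (leq0n _) (leqnn _).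
have cd : c = (d + e + 2 - a)%N.
  have up : (d + e + 2 - a <= c)%N.
    have hFdn := Fn d (ltnW hd).
    have := proj1 (Schar _ hFdn); rewrite GF ?(ltnW hd) // => /(_ (leqnn _)).
    rewrite hFd /h; case: ifP => ?; lia.
  have lo : (c <= d + e + 2 - a)%N.
    have [hc1' hc2'] := andP (Sc c.-1 (ltac:(lia)) (ltac:(lia))).
    have := R1 _ (leq0n _) hc2'; rewrite FG // /h; case: ifP => ?; lia.
  lia.
have cn' : (d + e + 2 <= n + a)%N by lia.
pose h' r := if (r < d.+1 + (e.+1 - a))%N then (r - d.+1 + a)%N else r.
have R2 : forall r, (d.+1 <= r)%N -> (r <= n.-1)%N -> F r = h' r.
  apply: (@run F G h' (fun y => (y < n)%N /\ ~~ (G y <= d)%N) d.+1 n.-1).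
  - move=> r s h1 h2 h3; apply: M2 => //; lia.
  - move=> y [hy hS]; move: hS; rewrite -ltnNge => hS; split => //.
      by have := Gn _ hy; lia.
    by apply: FG.
  - move=> r h1 hr; have hrn : (r < n)%N by lia.
    by split; [apply: Fn | rewrite GF // -ltnNge].
  - rewrite /h'; case: ifP => h0; split; try lia.
    by have -> : (d.+1 - d.+1 + a = a)%N by lia.
  - move=> y [hy hS].
    have hS' : ~ ((y < a)%N \/ (e < y < c)%N) by move/(Schar y hy); apply/negP.
    by rewrite /h'; case: ifP => h0; lia.
  - by move=> r h1 hr; rewrite /h'; case: ifP => ?; case: ifP => ?; lia.
  - move=> r y h1 hr [hy hS].
    have hS' : ~ ((y < a)%N \/ (e < y < c)%N) by move/(Schar y hy); apply/negP.
    rewrite /= /h'.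
    by case: ifP => h2; case: ifP => h3 hry; (split; [apply: keyV2' | ]); lia.
exists a; split; first by rewrite /validP da ae cn'.
move=> r hr; case: (leqP r d) => hrd.
  by rewrite (R1 _ (leq0n _) hrd) /h /shapeF; repeat case: ifP => ?; lia.
rewrite (R2 r hrd) /h' /shapeF; last by lia.
by repeat case: ifP => ?; lia.
Qed.

Lemma bigr_surj n (w : 'S_n) : bigrassmannian w ->
  exists x y a, validP n x y a /\ w = psi n x y a.
Proof.
case/andP => /eqP/ndes1P [d [hd HD]] /eqP/ndes1P [e [he HE]].
have h1 : forall r, (r < n)%N -> (Fw w r < n)%N by move=> r hr; rewrite (FwEo _ hr).
have h2 : forall r, (r < n)%N -> (Fw w^-1 r < n)%N by move=> r hr; rewrite (FwEo _ hr).
have h3 : forall r, (r < n)%N -> Fw w^-1 (Fw w r) = r.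
  by move=> r hr; rewrite (FwEo _ hr) FwE permK.
have h4 : forall r, (r < n)%N -> Fw w (Fw w^-1 r) = r.
  by move=> r hr; rewrite (FwEo _ hr) FwE permKV.
have [a [v hF]] := @surj_nat n (Fw w) (Fw w^-1) d e h1 h2 h3 h4 hd he HD HE.
exists d, e, a; split => //; apply/permP => i; apply: ord_inj.
by rewrite psiE // -hF // FwE.
Qed.

Lemma psi_inj3 n x1 y1 a1 x2 y2 a2 : validP n x1 y1 a1 -> validP n x2 y2 a2 ->
  psi n x1 y1 a1 = psi n x2 y2 a2 -> [/\ x1 = x2, y1 = y2 & a1 = a2].
Proof.
move=> v1 v2 e.
have hs : forall r, (r < n)%N -> shapeF x1 y1 a1 r = shapeF x2 y2 a2 r.
  by move=> r hr; rewrite -(psiF v1 hr) -(psiF v2 hr) e.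
have hx2 : (x2.+1 < n)%N by case/and3P: v2 => h1 h2 h3; lia.
have hx1 : (x1.+1 < n)%N by case/and3P: v1 => h1 h2 h3; lia.
have ex : x2 = x1.
  apply/(shape_desc v1 hx2); rewrite !hs //; last exact: ltnW.
  exact/(shape_desc v2 hx2).
subst x2.
have := hs x1.+1 hx1; have := hs x1 (ltnW hx1).
case/and3P: v1 => h1 h2 h3; case/and3P: v2 => h4 h5 h6.
rewrite /shapeF; repeat case: ifP => ?; move=> *; split; lia.
Qed.

Definition Gn (x y a p q : nat) : nat := minn p (minn q (a + (p - x.+1) + (q - y.+1))).

Lemma G_step n x y a r c : validP n x y a -> (r < n)%N -> (c <= n)%N ->
  (Gn x y a r.+1 c = Gn x y a r c + (shapeF x y a r < c))%N.
Proof.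
move=> /and3P[h1 h2 h3] hr hc; rewrite /Gn /shapeF.
by case: ifP => ?; [|case: ifP => ?; [|case: ifP => ?]]; case: ltnP => ?; lia.
Qed.

Lemma perm_mx_entry n (s : 'S_n) (i j : 'I_n) : perm_mx s i j = ((s i == j) : nat)%:R :> int.
Proof. by rewrite perm_mxEsub !mxE. Qed.


Lemma perm_rowsum n (s : 'S_n) (i : 'I_n) q :
  \sum_(j < n | (j < q)%N) (perm_mx s : 'M[int]_n) i j = ((s i < q)%N : nat)%:R.
Proof.
under eq_bigr do rewrite perm_mx_entry.
case: (ltnP (s i) q) => h.
  rewrite (bigD1 (s i)) //= eqxx big1 ?addr0 // => j /andP[_ ne].
  by rewrite eq_sym (negbTE ne).
rewrite big1 // => j hj.
have -> : (s i == j) = false by apply/negbTE; apply/eqP => e; move: hj; rewrite -e ltnNge h.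
by [].
Qed.

Definition Gz x y a (p q : nat) : int := (Gn x y a p q)%:Z.

Lemma csum_psi n x y a : validP n x y a -> forall p q, (p <= n)%N -> (q <= n)%N ->
  csum (perm_mx (psi n x y a)) p q = Gz x y a p q.
Proof.
move=> v; elim=> [|p IH] q hp hq; first by rewrite csum0l /Gz /Gn min0n.
rewrite (csum_rowSn _ hp) perm_rowsum IH ?(ltnW hp) // /Gz (G_step v hp hq) psiE //.
by rewrite PoszD natz.
Qed.

Lemma le_psi n x y a (A : 'M[int]_n) : is_ASM A -> validP n x y a ->
  asm_le (perm_mx (psi n x y a)) A = (csum A x.+1 y.+1 <= a%:Z).
Proof.
move=> aA v; have vA := ASM_valid aA.
have [hx hy] : (x.+1 <= n)%N /\ (y.+1 <= n)%N by case/and3P: v => h1 h2 h3; split; lia.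
apply/forallP/idP.
  move=> H; have := H (inord x.+1) => /forallP /(_ (inord y.+1)).
  rewrite !inordK ?ltnS // csum_psi // /Gz /Gn.
  have -> : minn x.+1 (minn y.+1 (a + (x.+1 - x.+1) + (y.+1 - y.+1))) = a.
    by case/and3P: v => h1 h2 h3; lia.
  by [].
move=> H i; apply/forallP => j.
have hi : (i <= n)%N := ltn_ord i.
have hj : (j <= n)%N := ltn_ord j.
rewrite csum_psi // /Gz /Gn.
have [b0 b1 b2 b3] := vbounds vA hi hj.
set I := maxn i x.+1; set J := maxn j y.+1.
have hI : (I <= n)%N by rewrite geq_max hi hx.
have hJ : (J <= n)%N by rewrite geq_max hj hy.
have := @lip_r _ _ vA i (I - i) j; rewrite subnKC ?leq_maxl // => /(_ hI hj) /andP[l1 _].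
have := @lip_c _ _ vA I j (J - j); rewrite subnKC ?leq_maxl // => /(_ hI hJ) /andP[l2 _].
have := @lip_r _ _ vA x.+1 (I - x.+1) J; rewrite subnKC ?leq_maxr // => /(_ hI hJ) /andP[_ l3].
have := @lip_c _ _ vA x.+1 y.+1 (J - y.+1); rewrite subnKC ?leq_maxr // => /(_ hx hJ) /andP[_ l4].
move: H l1 l2 l3 l4 b1 b2.
move: (csum A i j) (csum A I j) (csum A I J) (csum A x.+1 J) (csum A x.+1 y.+1) => c1 c2 c3 c4 c5.
rewrite /I /J; lia.
Qed.

Lemma count_int N L U :
  (\sum_(a < N) ((L <= a < U)%N : nat) = minn U N - L)%N.
Proof.
elim: N => [|N IH]; first by rewrite big_ord0 minn0.
rewrite big_ord_recr /= IH; case: (boolP (L <= N < U)%N) => h /=; lia.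
Qed.

Lemma Posz_sum (I : finType) (f : I -> nat) : (\sum_i f i)%N%:Z = \sum_i (f i)%:Z.
Proof. by rewrite -natz natr_sum; apply: eq_bigr => i _; rewrite natz. Qed.

Lemma inner_count n (A : 'M[int]_n) (x y : 'I_n) : is_ASM A ->
  (\sum_(a < n) ((validP n x y a && (csum A x.+1 y.+1 <= a%:Z)%R) : nat))%N%:Z =
  (minn x.+1 y.+1)%:Z - csum A x.+1 y.+1.
Proof.
move=> aA; have vA := ASM_valid aA.
have hx : (x.+1 <= n)%N := ltn_ord x.
have hy : (y.+1 <= n)%N := ltn_ord y.
have [b0 b1 b2 b3] := vbounds vA hx hy.
have [c ec] : exists c : nat, csum A x.+1 y.+1 = c%:Z.
  by exists (absz (csum A x.+1 y.+1)); rewrite abszE ger0_norm.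
rewrite ec in b0 b1 b2 b3 *.
transitivity ((\sum_(a < n) ((maxn c (x.+1 + y.+1 - n) <= a < minn x.+1 y.+1)%N : nat))%N%:Z).
  congr Posz; apply: eq_bigr => a _; rewrite lez_nat.
  congr nat_of_bool; rewrite /validP; apply/idP/idP => H; lia.
rewrite count_int; lia.
Qed.

Lemma count_main n (A : 'M[int]_n) : is_ASM A ->
  (#|[set w : 'S_n | bigrassmannian w && asm_le (perm_mx w) A]|)%:Z =
  \sum_(x < n) \sum_(y < n) ((minn x.+1 y.+1)%:Z - csum A x.+1 y.+1).
Proof.
move=> aA.
pose V := [set t : 'I_n * 'I_n * 'I_n | validP n t.1.1 t.1.2 t.2].
pose Ps := fun t : 'I_n * 'I_n * 'I_n => psi n t.1.1 t.1.2 t.2.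
have eB : [set w : 'S_n | bigrassmannian w] = Ps @: V.
  apply/setP => w; rewrite inE; apply/idP/imsetP.
    move/bigr_surj => [x [y [a [v ->]]]].
    have [hx [hy ha]] : (x < n /\ y < n /\ a < n)%N by case/and3P: v => *; lia.
    by exists (Ordinal hx, Ordinal hy, Ordinal ha); rewrite // inE.
  by move=> [t]; rewrite inE => v ->; apply: psi_bigr.
have inj : {in V &, injective Ps}.
  move=> [[x1 y1] a1] [[x2 y2] a2]; rewrite !inE /= => v1 v2 e.
  have [e1 e2 e3] := psi_inj3 v1 v2 e.
  by congr (_, _, _); apply: ord_inj.
have cs : #|[set w : 'S_n | bigrassmannian w && asm_le (perm_mx w) A]| =
    (\sum_(w in [set w : 'S_n | bigrassmannian w]) (asm_le (perm_mx w) A : nat))%N.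
  rewrite -sum1_card big_mkcond [RHS]big_mkcond /=; apply: eq_bigr => w _.
  by rewrite !inE; case: bigrassmannian; case: asm_le.
rewrite cs eB (big_imset _ inj) /=.
rewrite (eq_bigr (fun t : 'I_n * 'I_n * 'I_n =>
   ((csum A t.1.1.+1 t.1.2.+1 <= t.2%:Z)%R : nat))); last first.
  by move=> t; rewrite inE => v; rewrite /Ps le_psi.
rewrite big_mkcond /=.
transitivity ((\sum_(xy : 'I_n * 'I_n) \sum_(a < n)
   ((validP n xy.1 xy.2 a && (csum A xy.1.+1 xy.2.+1 <= a%:Z)%R) : nat))%N%:Z).
  congr Posz; rewrite pair_bigA; apply: eq_bigr => -[[x y] a] _ /=.
  by rewrite inE /=; case: validP.
rewrite -(pair_bigA _ (fun (x y : 'I_n) => \sum_(a < n)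
   ((validP n x y a && (csum A x.+1 y.+1 <= a%:Z)%R) : nat))%N) /=.
rewrite Posz_sum; apply: eq_bigr => x _; rewrite Posz_sum; apply: eq_bigr => y _.
exact: inner_count.
Qed.

Unset Implicit Arguments.

Theorem mainTheorem9 (n : nat) :
  (forall A B : 'M[int]_n, is_ASM A -> is_ASM B -> asm_le A B ->
     exists (k : nat) (P : nat -> 'M[int]_n),
       [/\ P 0%N = A, P k = B &
           forall m : nat, (m < k)%N ->
             asm_edge (P m) (P m.+1) /\ beta (P m.+1) - beta (P m) = 1]) /\
  (forall A : 'M[int]_n, is_ASM A ->
     beta A = (#|[set w : 'S_n | bigrassmannian w && asm_le (perm_mx w) A]|)%:Z).
Proof.
split.
  move=> A B aA aB /forallP H.
  have hle : forall i j, (i <= n)%N -> (j <= n)%N -> csum B i j <= csum A i j.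
    move=> i j hi hj; have := H (inord i) => /forallP /(_ (inord j)).
    by rewrite !inordK.
  have hS : 0 <= \sum_(i < n.+1) \sum_(j < n.+1) (csum A i j - csum B i j).
    apply: sumr_ge0 => i _; apply: sumr_ge0 => j _; rewrite subr_ge0.
    by apply: hle; [exact: (ltn_ord i)|exact: (ltn_ord j)].
  apply: (@path_lemma n B aB (absz (\sum_(i < n.+1) \sum_(j < n.+1) (csum A i j - csum B i j))) A aA hle).
  by rewrite abszE ger0_norm.
move=> A aA; rewrite count_main // /beta -sumrB; apply: eq_bigr => i _.
by rewrite -sumrB.
Qed.
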